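(* Let $1\le p<\infty$. Every lattice homomorphism on $\ell^p$ (with the coordinatewise order) has a non-trivial closed invariant subspace which is an ideal.
   Context: On $\ell^p$, $x\ge0$ means all coordinates are real and nonnegative, and lattice operations are coordinatewise. A lattice homomorphism is a bounded positive operator $T$ with $T(x\vee y)=Tx\vee Ty$. An ideal is a linear subspace $M$ such that $|x|\le|y|$ coordinatewise and $y\in M$ imply $x\in M$. Non-trivial means different from $\{0\}$ and $\ell^p$. *)

(* Defs.v *)
From HB Require Import structures.
From mathcomp Require Import all_boot all_order all_algebra.
From mathcomp Require Import all_classical all_reals all_analysis.
Set Implicit Arguments. Unset Strict Implicit. Unset Printing Implicit Defensive.
Import Order.TTheory GRing.Theory Num.Theory.
Import numFieldNormedType.Exports.
Local Open Scope classical_set_scope.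
Local Open Scope ring_scope.

Section Lp.
Variable R : realType.
Implicit Types (p : R) (x y : nat -> R).

Definition lp p x : Prop := cvgn (series (fun n => `|x n| `^ p)).

Definition lpnorm p x : R := (limn (series (fun n => `|x n| `^ p))) `^ p^-1.

Definition nonneg_seq x : Prop := forall n, 0 <= x n.
Definition sup_seq x y : nat -> R := fun n => Num.max (x n) (y n).

Definition bounded_op p (T : (nat -> R) -> (nat -> R)) : Prop :=
  [/\ (forall x, lp p x -> lp p (T x)),
      (forall (a b : R) x y, lp p x -> lp p y ->
         T (fun n => a * x n + b * y n) = (fun n => a * T x n + b * T y n)) &
      exists C : R, forall x, lp p x -> lpnorm p (T x) <= C * lpnorm p x].

Definition positive_op p (T : (nat -> R) -> (nat -> R)) : Prop :=
  forall x, lp p x -> nonneg_seq x -> nonneg_seq (T x).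

Definition lattice_hom p (T : (nat -> R) -> (nat -> R)) : Prop :=
  [/\ bounded_op p T, positive_op p T &
      forall x y, lp p x -> lp p y -> T (sup_seq x y) = sup_seq (T x) (T y)].

Definition lp_subspace p (M : set (nat -> R)) : Prop :=
  [/\ M `<=` lp p, M (fun _ => 0) &
      forall (a b : R) x y, M x -> M y -> M (fun n => a * x n + b * y n)].

Definition lp_closed p (M : set (nat -> R)) : Prop :=
  forall (u : nat -> nat -> R) x, (forall k, M (u k)) -> lp p x ->
    (fun k => lpnorm p (fun n => u k n - x n)) @ \oo --> (0 : R) -> M x.

Definition lp_ideal p (M : set (nat -> R)) : Prop :=
  lp_subspace p M /\
  forall x y, lp p x -> (forall n, `|x n| <= `|y n|) -> M y -> M x.

Definition op_invariant (T : (nat -> R) -> (nat -> R)) (M : set (nat -> R)) :=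
  forall x, M x -> M (T x).

Definition nontrivial p (M : set (nat -> R)) : Prop :=
  (exists x, M x /\ x <> (fun _ => 0)) /\ (exists y, lp p y /\ ~ M y).

End Lp.

(* Main.v *)
Require Import Defs.
From HB Require Import structures.
From mathcomp Require Import all_boot all_order all_algebra.
From mathcomp Require Import all_classical all_reals all_analysis.
From mathcomp Require Import ring lra.
Set Implicit Arguments. Unset Strict Implicit. Unset Printing Implicit Defensive.
Import Order.TTheory GRing.Theory Num.Theory.
Import numFieldNormedType.Exports.
Local Open Scope classical_set_scope.
Local Open Scope ring_scope.

Section Aux.
Variables (R : realType) (p : R).
Hypothesis hp : 1 <= p.

Let p0 : 0 < p. Proof. exact: lt_le_trans ltr01 hp. Qed.
Let pn0 : p != 0. Proof. by rewrite gt_eqF. Qed.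

Lemma pow_mono (a b : R) : 0 <= a -> a <= b -> a `^ p <= b `^ p.
Proof.
move=> a0 ab; apply: (ge0_ler_powR (ltW p0)) => //; rewrite nnegrE //.
exact: le_trans ab.
Qed.

Lemma lp_le (x y : nat -> R) : lp p y -> (forall n, `|x n| <= `|y n|) -> lp p x.
Proof.
move=> ly hxy; apply: (@series_le_cvg R _ (fun n => `|y n| `^ p)) => //.
by move=> n; apply: pow_mono.
Qed.

Lemma lp_fin (x : nat -> R) N : (forall n, (N <= n)%N -> x n = 0) -> lp p x.
Proof.
move=> hx; apply/cvg_ex; exists (series (fun n => `|x n| `^ p) N).
apply: cvg_near_cst; near=> n.
have : (N <= n)%N by near: n; exact: nbhs_infty_ge.
move=> /subnK <-; elim: (n - N)%N => //= k IH.
by rewrite addSn seriesSr IH hx ?leq_addl // normr0 powR0 // addr0.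
Unshelve. all: by end_near. Qed.

Lemma lp_comb (a b : R) (x y : nat -> R) : lp p x -> lp p y ->
  lp p (fun n => a * x n + b * y n).
Proof.
move=> lx ly.
pose K := (`|a| + `|b|) `^ p.
apply: (@series_le_cvg R _ (K *: ((fun n => `|x n| `^ p) + (fun n => `|y n| `^ p)))).
- by move=> n /=; exact: powR_ge0.
- by move=> n /=; rewrite mulr_ge0 ?addr_ge0 ?powR_ge0.
- move=> n /=.
  pose m := Num.max `|x n| `|y n|.
  have m0 : 0 <= m by rewrite le_max normr_ge0.
  have h1 : `|a * x n + b * y n| <= (`|a| + `|b|) * m.
    rewrite (le_trans (ler_normD _ _)) // !normrM mulrDl lerD //.
      by rewrite ler_wpM2l // le_max lexx.
    by rewrite ler_wpM2l // le_max lexx orbT.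
  rewrite (le_trans (pow_mono (normr_ge0 _) h1)) // powRM ?addr_ge0 //.
  rewrite ler_wpM2l ?powR_ge0 // /m.
  case: (leP `|x n| `|y n|) => _.
    by rewrite lerDr powR_ge0.
  by rewrite lerDl powR_ge0.
- by apply: is_cvg_seriesZ; apply: is_cvg_seriesD.
Qed.

Lemma lp_norm_ge (y : nat -> R) n : lp p y -> `|y n| <= lpnorm p y.
Proof.
move=> ly.
have h1 : `|y n| `^ p <= limn (series (fun n => `|y n| `^ p)).
  apply: le_trans (nondecreasing_cvgn_le _ ly n.+1).
    by rewrite seriesSr lerDr sumr_ge0 // => i _; exact: powR_ge0.
  by apply: nondecreasing_series => k _ _; exact: powR_ge0.
have L0 : 0 <= limn (series (fun n => `|y n| `^ p)).
  exact: le_trans (powR_ge0 _ _) h1.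
rewrite /lpnorm -[X in X <= _](@powRr1 _ `|y n|) // -(mulfV pn0) powRrM.
have pi0 : 0 <= p^-1 by rewrite invr_ge0 ltW.
apply: (ge0_ler_powR pi0); rewrite ?nnegrE ?powR_ge0 //.
Qed.

Definition trunc N (x : nat -> R) n := if (n < N)%N then x n else 0.
Definition tail N (x : nat -> R) n := if (n < N)%N then 0 else x n.

Lemma lp_tail N x : lp p x -> lp p (tail N x).
Proof.
move=> lx; apply: (lp_le (y := x)) => // n; rewrite /tail; case: ifP => // _.
by rewrite normr0.
Qed.

Lemma lp_trunc N x : lp p x -> lp p (trunc N x).
Proof.
move=> lx; apply: (lp_le (y := x)) => // n; rewrite /trunc; case: ifP => // _.
by rewrite normr0.
Qed.

Lemma tail_small x : lp p x -> forall e, 0 < e -> exists N, lpnorm p (tail N x) <= e.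
Proof.
move=> lx e e0.
set u := fun n => `|x n| `^ p.
set S := series u.
set L := limn S.
have SL : S @ \oo --> L by exact: lx.
have ep : 0 < e `^ p by rewrite powR_gt0.
have [N _ HN] := cvgr_dist_le _ _ SL _ ep.
exists N.
have HNN : `|L - S N| <= e `^ p by apply: HN => /=.
set ut := fun n => `|tail N x n| `^ p.
have eqt : forall m, series ut m = S m - S (minn m N).
  elim=> [|m IH]; first by rewrite /series /= min0n subrr big_geq.
  rewrite seriesSr IH /ut /tail.
  case: (ltnP m N) => hm.
    by rewrite (minn_idPl hm) normr0 powR0 // addr0 !subrr.
  rewrite (minn_idPr (leqW hm)) /= /S seriesSr /u.
  by rewrite addrAC.
have ltl : lp p (tail N x) by exact: lp_tail.
have cvB : (fun m => S m - S N) @ \oo --> L - S N.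
  by apply: cvgB => //; exact: cvg_cst.
have le1 : limn (series ut) <= L - S N.
  rewrite -(cvg_lim _ cvB) //.
  apply: ler_lim => //; first by apply/cvg_ex; eexists; exact: cvB.
  near=> m; rewrite eqt (minn_idPr _) //.
  by near: m; exact: nbhs_infty_ge.
have le0 : 0 <= limn (series ut).
  apply: limr_ge => //; near=> m.
  by rewrite /series /=; apply: sumr_ge0 => i _; exact: powR_ge0.
have pi0 : 0 <= p^-1 by rewrite invr_ge0 ltW.
rewrite /lpnorm -/ut.
apply: (le_trans (ge0_ler_powR pi0 _ _ le1)); rewrite ?nnegrE //.
  exact: le_trans le1.
rewrite -[leRHS](@powRr1 _ e) ?(ltW e0) // -(mulfV pn0) powRrM.
apply: (ge0_ler_powR pi0); rewrite ?nnegrE ?powR_ge0 //.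
  exact: le_trans le1.
by rewrite (le_trans (ler_norm _)).
Unshelve. all: by end_near. Qed.


Definition ev (k : nat) : nat -> R := fun n => if n == k then 1 else 0.

Lemma lp_ev k : lp p (ev k).
Proof.
apply: (lp_fin (N := k.+1)) => n hn; rewrite /ev.
by case: eqP => // E; move: hn; rewrite E ltnn.
Qed.

Lemma lp_zero : lp p (fun _ => 0).
Proof. exact: (lp_fin (N := 0)). Qed.

Lemma key (T : (nat -> R) -> (nat -> R)) : lattice_hom p T ->
  forall x n, lp p x -> (forall k, T (ev k) n * x k = 0) -> T x n = 0.
Proof.
move=> [[hl hlin [C hC]] _ _] x n lx hk.
have T0 : T (fun _ => 0) = fun _ => 0.
  have E : (fun m => 0 * (fun _ : nat => (0:R)) m + 0 * (fun _ : nat => (0:R)) m)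
     = (fun _ => 0) by apply/funext => m; rewrite mul0r addr0.
  have := hlin 0 0 _ _ lp_zero lp_zero; rewrite E => ->.
  by apply/funext => m; rewrite !mul0r addr0.
have htr : forall N, T (trunc N x) n = 0.
  elim=> [|N IH].
    have -> : trunc 0 x = (fun _ => 0) by apply/funext.
    by rewrite T0.
  have -> : trunc N.+1 x = (fun m => 1 * trunc N x m + x N * ev N m).
    apply/funext => m; rewrite /trunc /ev ltnS leq_eqVlt.
    case: (eqVneq m N) => [->|_] /=.
      by rewrite ltnn mulr1 mulr0 add0r.
    by rewrite mul1r mulr0 addr0.
  rewrite hlin; [|exact: lp_trunc|exact: lp_ev]. rewrite /= IH (mulrC (x N)) hk.
  by rewrite mulr0 addr0.
have hsplit : forall N, T x n = T (tail N x) n.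
  move=> N.
  have E : T x = T (fun m => 1 * trunc N x m + 1 * tail N x m).
    congr T; apply/funext => m; rewrite /trunc /tail.
    by case: ifP => _; rewrite ?mul1r ?mulr0 ?addr0 ?add0r.
  rewrite E hlin; [|exact: lp_trunc|exact: lp_tail].
  by rewrite /= htr !mul1r add0r.
apply/eqP; rewrite -normr_le0; apply/ler_addgt0Pr => z z0; rewrite add0r.
have c0 : 0 < `|C| + 1 by rewrite ltr_wpDl.
have [N hN] := tail_small lx (divr_gt0 z0 c0).
rewrite (hsplit N).
have lt0 : 0 <= lpnorm p (tail N x) by exact: powR_ge0.
apply: (le_trans (lp_norm_ge n (hl _ (lp_tail (N:=N) lx)))).
apply: (le_trans (hC _ (lp_tail (N:=N) lx))).
apply: (@le_trans _ _ (`|C| * lpnorm p (tail N x))).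
  by rewrite ler_wpM2r // ler_norm.
apply: (@le_trans _ _ ((`|C| + 1) * lpnorm p (tail N x))).
  by rewrite ler_wpM2r // lerDl.
rewrite (le_trans (ler_wpM2l (ltW c0) hN)) //.
by rewrite mulrC divfK ?gt_eqF.
Qed.

End Aux.

Unset Implicit Arguments.

Theorem corollary3p6 (R : realType) (p : R) (hp : 1 <= p)
  (T : (nat -> R) -> (nat -> R)) (hT : lattice_hom p T) :
  exists M : set (nat -> R),
    [/\ lp_ideal p M, lp_closed p M, op_invariant T M & nontrivial p M].
Proof.
have hT' := hT.
case: hT => [[hl hlin [C hC]] hpos hsup].
have evnn : forall k, nonneg_seq (ev R k).
  by move=> k m; rewrite /ev; case: eqP.
have tnn : forall n k, 0 <= T (ev R k) n.
  by move=> n k; apply: hpos; [exact: lp_ev|exact: evnn].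
have uniq : forall n j k, 0 < T (ev R j) n -> 0 < T (ev R k) n -> j = k.
  move=> n j k hj hk; case: (eqVneq j k) => // njk.
  have E : sup_seq (ev R j) (ev R k) = fun m => 1 * ev R j m + 1 * ev R k m.
    apply/funext => m; rewrite /sup_seq /ev.
    case: (eqVneq m j) => [->|mj].
      by rewrite (negbTE njk) /= mulr1 mulr0 addr0 max_l // ler01.
    case: (eqVneq m k) => [_|mk] /=.
      by rewrite mulr0 mulr1 add0r max_r // ler01.
    by rewrite mulr0 addr0 maxxx.
  have := hsup _ _ (lp_ev hp (k:=j)) (lp_ev hp (k:=k)).
  rewrite E hlin; [|exact: lp_ev|exact: lp_ev].
  move=> /(congr1 (fun f => f n)) /=; rewrite /sup_seq !mul1r.
  case: (leP (T (ev R j) n) (T (ev R k) n)) => _ h; move: hj hk h;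
    generalize (T (ev R j) n) (T (ev R k) n) => u v; clear => hu hv hh;
    (suff : (0:R) < 0 by rewrite ltxx); lra.
have /choice [s hs] : forall n, exists s : nat, forall k, 0 < T (ev R k) n -> k = s.
  move=> n.
  case: (pselect (exists k, 0 < T (ev R k) n)) => [[k0 hk0]|nex].
    by exists k0 => k hk; exact: uniq hk hk0.
  by exists 0%N => k hk; exfalso; apply: nex; exists k.
pose B := fun m : nat => exists i, m = iter i.+1 s 0%N.
have Bcl : forall n k, B n -> 0 < T (ev R k) n -> B k.
  by move=> n k [i ->] hk; exists i.+1; rewrite (hs _ _ hk).
have [a Ba] : exists a, ~ B a.
  case: (pselect (B 0%N)) => [[i hi]|nB0]; last by exists 0%N.
  have per : forall q r, iter (q * i.+1 + r) s 0%N = iter r s 0%N.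
    elim=> [|q IH] r; first by rewrite mul0n add0n.
    by rewrite mulSn -addnA addnC iterD -hi IH.
  exists (\max_(j < i.+1) iter j s 0%N).+1 => -[j hj].
  have : (iter j.+1 s 0%N <= \max_(j < i.+1) iter j s 0%N)%N.
    rewrite (divn_eq j.+1 i.+1) per.
    have H := ltn_pmod j.+1 (ltn0Sn i). exact: (leq_bigmax (Ordinal H)).
  by rewrite -hj ltnn.
exists [set x | lp p x /\ forall m, B m -> x m = 0].
split.
- split; first split.
  + by move=> x [].
  + by split; [exact: lp_zero|].
  + move=> a0 b0 x y [lx hx] [ly hy]; split; first exact: lp_comb.
    by move=> m Bm; rewrite hx // hy // !mulr0 addr0.
  move=> x y lx hxy [ly hy]; split => // m Bm.
  by have := hxy m; rewrite hy // normr0 normr_le0 => /eqP.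
- move=> u x hu lx hcv; split => // m Bm.
  apply/eqP; rewrite -normr_le0.
  apply: (cvgr_to_ge hcv); apply: nearW => k.
  have luk : lp p (fun n => u k n - x n).
    have -> : (fun n => u k n - x n) = (fun n => 1 * u k n + (-1) * x n).
      by apply/funext => n; rewrite mul1r mulN1r.
    by apply: lp_comb; [exact: hp | exact: (proj1 (hu k)) | exact: lx].
  by have := lp_norm_ge hp m luk; rewrite /= ((proj2 (hu k)) m Bm) sub0r normrN.
- move=> x [lx hx]; split; first exact: hl.
  move=> n Bn; apply: (key hp hT') => // k.
  have := tnn n k; rewrite le_eqVlt => /orP [/eqP <-|pos]; first by rewrite mul0r.
  by rewrite hx ?mulr0 //; exact: Bcl Bn pos.
- split.
  + exists (ev R a); split.
      split; first exact: lp_ev.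
      move=> m Bm; rewrite /ev; case: eqP => // E.
      by exfalso; apply: Ba; rewrite -E.
    move=> /(congr1 (fun f => f a)); rewrite /ev eqxx => /eqP.
    by rewrite oner_eq0.
  + exists (ev R (s 0%N)); split; first exact: lp_ev.
    move=> [_ h]; have := h (s 0%N) (ex_intro _ 0%N erefl).
    by rewrite /ev eqxx => /eqP; rewrite oner_eq0.
Qed.
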